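(* For every positive integer $n$ with $n\not\equiv -1\pmod 7$, \[u(n,n+3)=\varepsilon(n,n+3)=\left\lfloor\frac{4n+12}{7}\right\rfloor.\] Moreover, for every positive integer $m$, $u(7m-1,7m+2)=4m$.
   Context: All matrices are binary. For a nonempty set $S$ of columns of a binary matrix, let $z$ be the sum over the integers of the columns in $S$. $S$ is called $1$-free if no entry of $z$ equals $1$, and even if all entries of $z$ are even. For a binary $m\times n$ matrix $A$ with $m<n$: $\varepsilon(A)$ is the smallest cardinality of a nonempty even set of columns, and $u(A)$ the smallest cardinality of a nonempty $1$-free set of columns. For $m<n$, $\varepsilon(m,n)$ and $u(m,n)$ are the maxima of $\varepsilon(A)$, resp. $u(A)$, over all binary $m\times n$ matrices. *)

(* Defs.v *)
From mathcomp Require Import all_boot all_order all_algebra.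
Set Implicit Arguments. Unset Strict Implicit. Unset Printing Implicit Defensive.

Definition colsum (m n : nat) (A : 'M[bool]_(m, n)) (S : {set 'I_n}) (i : 'I_m) : nat :=
  \sum_(j in S) nat_of_bool (A i j).

Definition even_set (m n : nat) (A : 'M[bool]_(m, n)) (S : {set 'I_n}) : bool :=
  [forall i, ~~ odd (colsum A S i)].

Definition onefree_set (m n : nat) (A : 'M[bool]_(m, n)) (S : {set 'I_n}) : bool :=
  [forall i, colsum A S i != 1%N].

(* smallest cardinality of a nonempty even (resp. 1-free) set of columns.
   The default value n of the min is never attained spuriously when m < n,
   since then a nonempty even set always exists. *)
Definition epsA (m n : nat) (A : 'M[bool]_(m, n)) : nat :=
  \big[minn/n]_(S : {set 'I_n} | (S != set0) && even_set A S) #|S|.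

Definition uA (m n : nat) (A : 'M[bool]_(m, n)) : nat :=
  \big[minn/n]_(S : {set 'I_n} | (S != set0) && onefree_set A S) #|S|.

Definition eps_mn (m n : nat) : nat := \max_(A : 'M[bool]_(m, n)) epsA A.
Definition u_mn (m n : nat) : nat := \max_(A : 'M[bool]_(m, n)) uA A.

(* Main.v *)
Require Import Defs.
From mathcomp Require Import all_boot all_order all_algebra.
From mathcomp Require Import zify.
Set Implicit Arguments. Unset Strict Implicit. Unset Printing Implicit Defensive.

Lemma bigmin_le_term (I : finType) (P : pred I) (F : I -> nat) x j :
  P j -> \big[minn/x]_(i | P i) F i <= F j.
Proof.
move=> Pj; have : j \in index_enum I by rewrite mem_index_enum.
elim: (index_enum I) => [//|a s IH]; rewrite inE big_cons.
case/orP => [/eqP <-|/IH h]; first by rewrite Pj geq_minl.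
by case: (P a) => //; apply: leq_trans (geq_minr _ _) h.
Qed.

Lemma bigmin_ge (I : finType) (P : pred I) (F : I -> nat) x m :
  m <= x -> (forall i, P i -> m <= F i) -> m <= \big[minn/x]_(i | P i) F i.
Proof.
move=> hx hF; apply: (big_ind (fun v => m <= v)) => // a b ha hb.
by rewrite leq_min ha hb.
Qed.

Definition sdT (T : finType) (S U : {set T}) := (S :\: U) :|: (U :\: S).

Lemma in_sd (T : finType) (S U : {set T}) x : (x \in sdT S U) = (x \in S) (+) (x \in U).
Proof. by rewrite !inE; case: (x \in S); case: (x \in U). Qed.

Lemma sdK (T : finType) (S U : {set T}) : sdT (sdT S U) U = S.
Proof. by apply/setP => x; rewrite !in_sd -addbA addbb addbF. Qed.

Lemma sd_eq0 (T : finType) (S U : {set T}) : sdT S U = set0 -> S = U.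
Proof.
move/setP => h; apply/setP => x; move: (h x); rewrite in_sd inE.
by case: (x \in S); case: (x \in U).
Qed.

Lemma sd_eq (T : finType) (S U W : {set T}) : sdT S U = W -> U = sdT S W.
Proof.
move=> <-; apply/setP => x; rewrite !in_sd.
by case: (x \in S); case: (x \in U).
Qed.

Lemma card_sd (T : finType) (X Y : {set T}) : #|sdT X Y| = #|X :\: Y| + #|Y :\: X|.
Proof.
rewrite -(cardsID X (sdT X Y)).
have -> : sdT X Y :&: X = X :\: Y.
  by apply/setP => x; rewrite !inE; case: (x \in X); case: (x \in Y).
have -> : sdT X Y :\: X = Y :\: X.
  by apply/setP => x; rewrite !inE; case: (x \in X); case: (x \in Y).
by [].
Qed.

Lemma pick_out (T : finType) (E : {set T}) (s : seq T) :
  size s < #|E| -> exists2 x, x \in E & x \notin s.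
Proof.
move=> h; apply/subsetPn; apply/negP => /subset_leq_card h2.
have := leq_trans h2 (card_size s); by rewrite leqNgt h.
Qed.

Lemma ar_key (c e I dc de : nat) : c <= e -> c <= de + dc -> I + dc = c -> I + de = e ->
  c <= 2 * de.
Proof. lia. Qed.

Lemma ar_res (c N x1 x2 x3 u i a b : nat) :
  x3 = a + b -> i + a = x1 -> i + b = x2 -> u + i = x1 + x2 -> u <= N - c ->
  x1 + x2 + x3 <= 2 * (N - c).
Proof. lia. Qed.

Section Upper.
Variables (n : nat) (A : 'M[bool]_(n, n+3)).

Lemma odd_colsum_sd S U i :
  odd (colsum A (sdT S U) i) = odd (colsum A S i) (+) odd (colsum A U i).
Proof.
rewrite /colsum (big_setID S (A := sdT S U)) /= (big_setID U (A := S)) /=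
  (big_setID S (A := U)) /=.
have -> : sdT S U :&: S = S :\: U.
  by apply/setP => x; rewrite !inE; case: (x \in S); case: (x \in U).
have -> : sdT S U :\: S = U :\: S.
  by apply/setP => x; rewrite !inE; case: (x \in S); case: (x \in U).
rewrite (setIC U S) !oddD.
move: (odd (\sum_(j in S :&: U) _)) (odd (\sum_(j in S :\: U) _))
  (odd (\sum_(j in U :\: S) _)) => a b c.
by case: a; case: b; case: c.
Qed.

Definition syn (S : {set 'I_(n+3)}) : {ffun 'I_n -> bool} :=
  [ffun i => odd (colsum A S i)].

Lemma syn_even S U : syn S = syn U -> even_set A (sdT S U).
Proof.
move=> h; apply/forallP => i; rewrite odd_colsum_sd.
by move/ffunP: h => /(_ i); rewrite !ffunE => ->; rewrite addbb.
Qed.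

Lemma even_sd S U : even_set A S -> even_set A U -> even_set A (sdT S U).
Proof.
move=> /forallP hS /forallP hU; apply/forallP => i.
by rewrite odd_colsum_sd (negbTE (hS i)) (negbTE (hU i)).
Qed.

Lemma even_onefree S : even_set A S -> onefree_set A S.
Proof.
move=> /forallP h; apply/forallP => i; apply/negP => /eqP e.
by have := h i; rewrite e.
Qed.

Lemma fiber_big : exists y, 7 < #|[set S | syn S == y]|.
Proof.
case: (boolP [exists y, 7 < #|[set S | syn S == y]|]) => [/existsP//|].
rewrite negb_exists => /forallP H.
have : #|{set 'I_(n+3)}| <= 7 * 2 ^ n.
  have -> : #|{set 'I_(n+3)}| = \sum_(S : {set 'I_(n+3)}) 1.
    by rewrite sum_nat_const muln1.
  rewrite (partition_big (fun S => syn S) xpredT) //=.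
  have -> : 7 * 2 ^ n = \sum_(y : {ffun 'I_n -> bool}) 7.
    by rewrite sum_nat_const card_ffun card_bool card_ord mulnC.
  apply: leq_sum => y _.
  rewrite sum1_card.
  have := H y; rewrite -leqNgt; apply: leq_trans.
  by rewrite cardsE.
rewrite -cardsT -powersetT card_powerset cardsT card_ord expnD.
have := expn_gt0 2 n; lia.
Qed.

Definition Ev := [set S | even_set A S].

Lemma Ev_big : 7 < #|Ev|.
Proof.
have [y hy] := fiber_big.
have [S0 hS0] : exists S0, S0 \in [set S | syn S == y].
  by apply/set0Pn; rewrite -card_gt0; apply: leq_trans hy.
apply: (leq_trans hy).
have <- : #|[set sdT T S0 | T in [set S | syn S == y]]| = #|[set S | syn S == y]|.
  apply: card_in_imset => T1 T2 _ _ e.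
  by rewrite -(sdK T1 S0) e sdK.
apply: subset_leq_card; apply/subsetP => x /imsetP [T hT ->].
rewrite inE; apply: syn_even.
by move: hT hS0; rewrite !inE => /eqP -> /eqP ->.
Qed.

Lemma upper : exists d x1 x2 x3,
  epsA A <= d /\ uA A <= d /\ d <= 2 * x1 /\ d <= 2 * x2 /\ d <= 2 * x3
    /\ x1 + x2 + x3 <= 2 * (n + 3 - d).
Proof.
have E8 := Ev_big.
have [c0 hc0 nc0] := pick_out (s := [:: set0]) (leq_trans (isT : 1 < 8) E8).
pose P := fun S : {set 'I_(n+3)} => (S != set0) && even_set A S.
have Pc0 : P c0 by rewrite /P; move: hc0 nc0; rewrite inE !inE => -> ->.
case: (arg_minnP (fun S : {set 'I_(n+3)} => #|S|) Pc0) => c Pc cmin.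
have key : forall e, even_set A e -> e != set0 -> e != c -> #|c| <= 2 * #|e :\: c|.
  move=> e ee ne0 nec.
  have h1 := cmin e (introT andP (conj ne0 ee)).
  have h2 : #|c| <= #|sdT e c|.
    apply: cmin; apply/andP; split; last by apply: even_sd => //; case/andP: Pc.
    by apply/eqP => /sd_eq0 /eqP; rewrite (negbTE nec).
  have i1 := cardsID c e.
  have i2 := cardsID e c.
  rewrite card_sd in h2; rewrite setIC in i1; exact: ar_key h1 h2 i2 i1.
have [e1 he1 ne1] := pick_out (s := [:: set0; c]) (leq_trans (isT : 2 < 8) E8).
have [e2 he2 ne2] := pick_out (s := [:: set0; c; e1; sdT e1 c]) (leq_trans (isT : 4 < 8) E8).
move: he1 he2 ne1 ne2; rewrite !inE !negb_or => ev1 ev2 /andP [n10 n1c]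
  /and4P [n20 n2c n21 n2s].
have ev3 : even_set A (sdT e1 e2) by apply: even_sd.
have n30 : sdT e1 e2 != set0.
  by apply/eqP => /sd_eq0 e; rewrite e eqxx in n21.
have n3c : sdT e1 e2 != c.
  by apply/eqP => /sd_eq e; rewrite e eqxx in n2s.
have k1 := key _ ev1 n10 n1c.
have k2 := key _ ev2 n20 n2c.
have k3 := key _ ev3 n30 n3c.
have e3c : sdT e1 e2 :\: c = sdT (e1 :\: c) (e2 :\: c).
  by apply/setP => x; rewrite !inE; case: (x \in e1); case: (x \in e2); case: (x \in c).
rewrite e3c in k3.
exists #|c|, #|e1 :\: c|, #|e2 :\: c|, #|sdT (e1 :\: c) (e2 :\: c)|.
have ec : even_set A c by case/andP: Pc.
split; first exact: bigmin_le_term.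
split; first by apply: bigmin_le_term; case/andP: Pc => -> /=; exact: even_onefree.
do 3 (split; first by []).
have h1 := card_sd (e1 :\: c) (e2 :\: c).
have h2 := cardsID (e2 :\: c) (e1 :\: c).
have h3 := cardsID (e1 :\: c) (e2 :\: c).
have h4 := cardsUI (e1 :\: c) (e2 :\: c).
have h5 : #|(e1 :\: c) :|: (e2 :\: c)| <= #|~: c|.
  apply: subset_leq_card; apply/subsetP => x; rewrite !inE.
  by case: (x \in c); rewrite ?andbF.
have h6 := cardsC c; rewrite card_ord in h6.
have h7 : #|~: c| = n + 3 - #|c| :=
  etrans (esym (addKn #|c| #|~: c|)) (congr1 (subn^~ #|c|) h6).
rewrite h7 in h5; rewrite setIC in h3.
exact: ar_res h1 h2 h3 h4 h5.
Qed.

End Upper.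


Definition lines : seq (seq nat) := [:: [:: 1;3;5]; [:: 1;4;6]; [:: 2;3;6]; [:: 0;5;6]].
Definition lk : seq nat := [:: 0;1;3].

Lemma fano_bool (f : nat -> bool) :
  (count f (nth [::] lines 0) != 1) ==> (count f (nth [::] lines 1) != 1) ==>
  (count f (nth [::] lines 2) != 1) ==> (count f (nth [::] lines 3) != 1) ==>
  has f (iota 0 7) ==> (4 <= \sum_(0 <= x < 7) f x) && [|| f 0, f 1 | f 3].
Proof.
rewrite /lines /= /index_iota /= !big_cons big_nil.
move: (f 0) (f 1) (f 2) (f 3) (f 4) (f 5) (f 6).
by do 7! case.
Qed.

Lemma fano (f : nat -> bool) :
  (forall q, q < 4 -> count f (nth [::] lines q) != 1) -> (exists2 x, x < 7 & f x) ->
  4 <= \sum_(0 <= x < 7) f x /\ [|| f 0, f 1 | f 3].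
Proof.
move=> H [x hx fx].
have hh : has f (iota 0 7) by apply/hasP; exists x => //; rewrite mem_iota.
have := fano_bool f.
rewrite (H 0 isT) (H 1 isT) (H 2 isT) (H 3 isT) hh /= => /andP [h1 h2]; by split.
Qed.


Lemma bool_link (x y : bool) : (x + (y + 0) != 1) -> x = y.
Proof. by case: x; case: y. Qed.

Section Constr.
Variables (nb : nat) (br : seq (seq nat)) (l0 l1 l2 d0 : nat).

Definition off (t : nat) := nb + 3 + 7 * t.
Definition links (k : nat) : seq nat :=
  if k is t.+1 then map (fun x => x + off t) lk else [:: l0; l1; l2].
Definition rowseq (i : nat) : seq nat :=
  if i < nb then nth [::] br i else
  let t := (i - nb) %/ 7 in let q := (i - nb) %% 7 in
  if q < 4 then map (fun x => x + off t) (nth [::] lines q)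
  else [:: nth 0 (links t) (q - 4); nth 0 lk (q - 4) + off t].

Hypothesis Hwf : all (fun r => uniq r && all (fun x => x < nb + 3) r) br.
Hypothesis Hsz : size br = nb.
Hypothesis Hl : [&& l0 < nb + 3, l1 < nb + 3 & l2 < nb + 3].
Hypothesis Hd0 : d0 <= nb + 3.
Hypothesis Hbase : forall f : nat -> bool,
  (forall i, i < nb -> count f (nth [::] br i) != 1) -> (exists2 x, x < nb + 3 & f x) ->
  d0 <= \sum_(0 <= x < nb + 3) f x /\ [|| f l0, f l1 | f l2].

Lemma rowseq_copy t q : q < 7 -> rowseq (nb + 7 * t + q) =
  if q < 4 then map (fun x => x + off t) (nth [::] lines q)
  else [:: nth 0 (links t) (q - 4); nth 0 lk (q - 4) + off t].
Proof.
move=> hq; rewrite /rowseq.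
have -> : (nb + 7 * t + q < nb) = false by apply/negbTE; rewrite -leqNgt; lia.
have -> : nb + 7 * t + q - nb = t * 7 + q by lia.
by rewrite divnMDl // modnMDl (divn_small hq) (modn_small hq) addn0.
Qed.

Lemma links_shape k : exists a b c, links k = [:: a; b; c] /\
  [/\ a < off k, b < off k & c < off k].
Proof.
case: k => [|t] /=.
  exists l0, l1, l2; split => //; rewrite /off muln0 addn0.
  by case/and3P: Hl.
exists (0 + off t), (1 + off t), (3 + off t); split => //.
rewrite /off; split; lia.
Qed.

Lemma off_succ k : off k.+1 = off k + 7.
Proof. rewrite /off; lia. Qed.

Lemma ext k (f : nat -> bool) :
  (forall i, i < nb + 7 * k -> count f (rowseq i) != 1) -> (exists2 x, x < off k & f x) ->
  d0 + 4 * k <= \sum_(0 <= x < off k) f x /\ has f (links k).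
Proof.
elim: k f => [|k IH] f H Hne.
  have H' : forall i, i < nb -> count f (nth [::] br i) != 1.
    move=> i hi; have := H i; rewrite muln0 addn0 /rowseq hi; by apply.
  move: Hne; rewrite /off muln0 addn0 => Hne.
  have [h1 h2] := Hbase H' Hne.
  by rewrite muln0 addn0; split => //=; rewrite orbF.
set o := off k.
pose g x := f (x + o).
have Hrow : forall q, q < 7 -> count f (rowseq (nb + 7 * k + q)) != 1.
  move=> q hq; apply: H; lia.
have HL : forall q, q < 4 -> count g (nth [::] lines q) != 1.
  move=> q hq; have hq7 : q < 7 by lia.
  by have := Hrow q hq7; rewrite rowseq_copy // hq count_map.
have [a [b [c [Ls [ha hb hc]]]]] := links_shape k.
have La : f a = g 0.
  by apply: bool_link; have := Hrow 4 isT; rewrite rowseq_copy // Ls.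
have Lb : f b = g 1.
  by apply: bool_link; have := Hrow 5 isT; rewrite rowseq_copy // Ls.
have Lc : f c = g 3.
  by apply: bool_link; have := Hrow 6 isT; rewrite rowseq_copy // Ls.
have Hsum : \sum_(0 <= x < off k.+1) f x = \sum_(0 <= x < o) f x + \sum_(0 <= x < 7) g x.
  rewrite off_succ -/o (@big_cat_nat _ _ _ o) //= ?leq_addr //.
  by rewrite -{2}[o]add0n big_addn addKn.
have Hlk : has f (links k.+1) = [|| g 0, g 1 | g 3].
  by rewrite /= orbF.
case E : (has f (iota 0 o)).
  move/hasP: E => [x]; rewrite mem_iota add0n => /andP [_ hx] fx.
  have Hk : forall i, i < nb + 7 * k -> count f (rowseq i) != 1.
    move=> i hi; apply: H; lia.
  have [s1 s2] := IH f Hk (ex_intro2 _ _ x hx fx).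
  rewrite Ls /= orbF La Lb Lc in s2.
  have Hg : exists2 x, x < 7 & g x.
    by case/or3P: s2 => h; [exists 0|exists 1|exists 3].
  have [t1 t2] := fano HL Hg.
  rewrite Hsum Hlk; split => //.
  rewrite -/o in s1; lia.
exfalso.
have Hg : exists2 x, x < 7 & g x.
  case: Hne => x hx fx; exists (x - o).
    rewrite off_succ -/o in hx; have : o <= x; last lia.
    rewrite leqNgt; apply/negP => hxo.
    by move/negbT/hasPn: E => /(_ x); rewrite mem_iota add0n hxo fx => /(_ isT).
  rewrite /g subnK // leqNgt; apply/negP => hxo.
  by move/negbT/hasPn: E => /(_ x); rewrite mem_iota add0n hxo fx => /(_ isT).
have [_ t2] := fano HL Hg.
move/negbT/hasPn: E => E.
case/or3P: t2 => h.
- by have := E a; rewrite mem_iota add0n ha La h => /(_ isT).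
- by have := E b; rewrite mem_iota add0n hb Lb h => /(_ isT).
- by have := E c; rewrite mem_iota add0n hc Lc h => /(_ isT).
Qed.


Lemma rowcopy_wf t q : q < 7 ->
  uniq (rowseq (nb + 7 * t + q)) && all (fun x => x < off t + 7) (rowseq (nb + 7 * t + q)).
Proof.
move=> hq; rewrite rowseq_copy //.
have [a [b [c [Ls [ha hb hc]]]]] := links_shape t.
case: q hq => [|[|[|[|[|[|[|q]]]]]]] // _; rewrite /= ?Ls /= !inE; lia.
Qed.

Lemma rows_wf k i : i < nb + 7 * k ->
  uniq (rowseq i) && all (fun x => x < off k) (rowseq i).
Proof.
move=> hik; case: (ltnP i nb) => hi.
  rewrite /rowseq hi.
  have := (all_nthP [::] Hwf) i; rewrite Hsz => /(_ hi) /andP [u a].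
  rewrite u /=; apply: sub_all a => x /= hx; rewrite /off; lia.
have e : i = nb + 7 * ((i - nb) %/ 7) + (i - nb) %% 7 by lia.
have hq : (i - nb) %% 7 < 7 by rewrite ltn_mod.
have ht : (i - nb) %/ 7 < k by lia.
move: (rowcopy_wf ((i - nb) %/ 7) hq); rewrite -e => /andP [u a].
rewrite u /=; apply: sub_all a => x /= hx; rewrite /off in hx *; lia.
Qed.

Definition cmat n : 'M[bool]_(n, n + 3) := \matrix_(i < n, j < n + 3) (val j \in rowseq i).

End Constr.


Definition sbS N (S : {set 'I_N}) (x : nat) : bool := x \in [seq val j | j in S].

Lemma sum_eq_count (s : seq nat) x : \sum_(y <- s) (y == x) = count_mem x s.
Proof. by elim: s => [|y s IH]; rewrite ?big_nil ?big_cons //= IH eq_sym. Qed.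

Lemma sum_pt N (S : {set 'I_N}) x : \sum_(j in S) ((val j == x) : nat) = sbS S x.
Proof.
rewrite -big_enum /= -(big_map val xpredT (fun y => (y == x) : nat)) sum_eq_count.
rewrite count_uniq_mem // map_inj_uniq ?enum_uniq //; exact: val_inj.
Qed.

Lemma sum_in_seq N (S : {set 'I_N}) (r : seq nat) :
  uniq r -> \sum_(j in S) ((val j \in r) : nat) = count (sbS S) r.
Proof.
elim: r => [|x r IH] /=; first by rewrite big1.
case/andP => xr ur.
have e : forall j : 'I_N, ((val j \in x :: r) : nat) = (val j == x) + (val j \in r).
  move=> j; rewrite in_cons; case: eqP => [->|] //=; by rewrite (negbTE xr).
rewrite (eq_bigr _ (fun j _ => e j)) big_split /= (IH ur); congr (_ + _); exact: sum_pt.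
Qed.

Lemma card_sb N (S : {set 'I_N}) : #|S| = \sum_(0 <= x < N) sbS S x.
Proof.
rewrite big_mkord -sum1_card big_mkcond /=; apply: eq_bigr => j _.
rewrite /sbS mem_map ?mem_enum; [by case: (j \in S) | exact: val_inj].
Qed.

Lemma sum_eq_bound (F : nat -> bool) a b : a = b ->
  \sum_(0 <= x < a) F x = \sum_(0 <= x < b) F x.
Proof. by move=> ->. Qed.

Lemma lower nb br l0 l1 l2 d0 :
  all (fun r => uniq r && all (fun x => x < nb + 3) r) br ->
  size br = nb ->
  [&& l0 < nb + 3, l1 < nb + 3 & l2 < nb + 3] ->
  d0 <= nb + 3 ->
  (forall f : nat -> bool,
    (forall i, i < nb -> count f (nth [::] br i) != 1) -> (exists2 x, x < nb + 3 & f x) ->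
    d0 <= \sum_(0 <= x < nb + 3) f x /\ [|| f l0, f l1 | f l2]) ->
  forall n k, n = nb + 7 * k -> d0 + 4 * k <= uA (cmat nb br l0 l1 l2 n).
Proof.
move=> Hwf Hsz Hl Hd0 Hbase n k en.
apply: bigmin_ge; first by lia.
move=> S /andP [nS oS].
have eN : n + 3 = off nb k by rewrite en /off; lia.
have H1 : forall i, i < nb + 7 * k -> count (sbS S) (rowseq nb br l0 l1 l2 i) != 1.
  move=> i hi; have hin : i < n by lia.
  move/forallP: oS => /(_ (Ordinal hin)).
  rewrite /colsum (eq_bigr (fun j : 'I_(n+3) => ((val j \in rowseq nb br l0 l1 l2 i) : nat))).
    rewrite sum_in_seq //; by case/andP: (rows_wf Hwf Hsz Hl Hd0 hi).
  by move=> j _; rewrite mxE.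
have H2 : exists2 x, x < off nb k & sbS S x.
  case/set0Pn: nS => j hj; exists (val j); first by rewrite -eN; exact: ltn_ord.
  by rewrite /sbS mem_map ?mem_enum //; exact: val_inj.
have [h _] := @ext _ _ _ _ _ _ Hwf Hsz Hl Hd0 Hbase k (sbS S) H1 H2.
by rewrite card_sb (sum_eq_bound (sbS S) eN).
Qed.

Definition br1 : seq (seq nat) := [:: [:: 0; 1; 2; 3]].
Lemma base1_bool (f : nat -> bool) :
  (count f (nth [::] br1 0) != 1) ==> has f (iota 0 (1 + 3)) ==> (2 <= \sum_(0 <= x < 1 + 3) f x) && [|| f 0, f 1 | f 2].
Proof.
rewrite /br1 /= /index_iota /= !big_cons big_nil.
move: (f 0) (f 1) (f 2) (f 3).
by do 4! case.
Qed.

Lemma base1 (f : nat -> bool) :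
  (forall i, i < 1 -> count f (nth [::] br1 i) != 1) -> (exists2 x, x < 1 + 3 & f x) ->
  2 <= \sum_(0 <= x < 1 + 3) f x /\ [|| f 0, f 1 | f 2].
Proof.
move=> H [x hx fx].
have hh : has f (iota 0 (1 + 3)) by apply/hasP; exists x => //; rewrite mem_iota.
have := base1_bool f.
rewrite (H 0 isT) hh /= => /andP [h1 h2]; by split.
Qed.

Lemma lower1 n k : n = 1 + 7 * k -> 2 + 4 * k <= uA (cmat 1 br1 0 1 2 n).
Proof. exact: (@lower 1 br1 0 1 2 2 isT erefl isT isT (@base1)). Qed.

Definition br2 : seq (seq nat) := [:: [:: 0; 2; 3]; [:: 1; 3; 4]].
Lemma base2_bool (f : nat -> bool) :
  (count f (nth [::] br2 0) != 1) ==> (count f (nth [::] br2 1) != 1) ==> has f (iota 0 (2 + 3)) ==> (2 <= \sum_(0 <= x < 2 + 3) f x) && [|| f 0, f 1 | f 2].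
Proof.
rewrite /br2 /= /index_iota /= !big_cons big_nil.
move: (f 0) (f 1) (f 2) (f 3) (f 4).
by do 5! case.
Qed.

Lemma base2 (f : nat -> bool) :
  (forall i, i < 2 -> count f (nth [::] br2 i) != 1) -> (exists2 x, x < 2 + 3 & f x) ->
  2 <= \sum_(0 <= x < 2 + 3) f x /\ [|| f 0, f 1 | f 2].
Proof.
move=> H [x hx fx].
have hh : has f (iota 0 (2 + 3)) by apply/hasP; exists x => //; rewrite mem_iota.
have := base2_bool f.
rewrite (H 0 isT) (H 1 isT) hh /= => /andP [h1 h2]; by split.
Qed.

Lemma lower2 n k : n = 2 + 7 * k -> 2 + 4 * k <= uA (cmat 2 br2 0 1 2 n).
Proof. exact: (@lower 2 br2 0 1 2 2 isT erefl isT isT (@base2)). Qed.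

Definition br3 : seq (seq nat) := [:: [:: 0; 2; 3]; [:: 1; 2; 5]; [:: 0; 2; 4; 5]].
Lemma base3_bool (f : nat -> bool) :
  (count f (nth [::] br3 0) != 1) ==> (count f (nth [::] br3 1) != 1) ==> (count f (nth [::] br3 2) != 1) ==> has f (iota 0 (3 + 3)) ==> (3 <= \sum_(0 <= x < 3 + 3) f x) && [|| f 0, f 1 | f 2].
Proof.
rewrite /br3 /= /index_iota /= !big_cons big_nil.
move: (f 0) (f 1) (f 2) (f 3) (f 4) (f 5).
by do 6! case.
Qed.

Lemma base3 (f : nat -> bool) :
  (forall i, i < 3 -> count f (nth [::] br3 i) != 1) -> (exists2 x, x < 3 + 3 & f x) ->
  3 <= \sum_(0 <= x < 3 + 3) f x /\ [|| f 0, f 1 | f 2].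
Proof.
move=> H [x hx fx].
have hh : has f (iota 0 (3 + 3)) by apply/hasP; exists x => //; rewrite mem_iota.
have := base3_bool f.
rewrite (H 0 isT) (H 1 isT) (H 2 isT) hh /= => /andP [h1 h2]; by split.
Qed.

Lemma lower3 n k : n = 3 + 7 * k -> 3 + 4 * k <= uA (cmat 3 br3 0 1 2 n).
Proof. exact: (@lower 3 br3 0 1 2 3 isT erefl isT isT (@base3)). Qed.

Definition br4 : seq (seq nat) := [:: [:: 2; 3; 4]; [:: 1; 3; 5]; [:: 1; 2; 6]; [:: 0; 3; 6]].
Lemma base4_bool (f : nat -> bool) :
  (count f (nth [::] br4 0) != 1) ==> (count f (nth [::] br4 1) != 1) ==> (count f (nth [::] br4 2) != 1) ==> (count f (nth [::] br4 3) != 1) ==> has f (iota 0 (4 + 3)) ==> (4 <= \sum_(0 <= x < 4 + 3) f x) && [|| f 0, f 1 | f 2].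
Proof.
rewrite /br4 /= /index_iota /= !big_cons big_nil.
move: (f 0) (f 1) (f 2) (f 3) (f 4) (f 5) (f 6).
by do 7! case.
Qed.

Lemma base4 (f : nat -> bool) :
  (forall i, i < 4 -> count f (nth [::] br4 i) != 1) -> (exists2 x, x < 4 + 3 & f x) ->
  4 <= \sum_(0 <= x < 4 + 3) f x /\ [|| f 0, f 1 | f 2].
Proof.
move=> H [x hx fx].
have hh : has f (iota 0 (4 + 3)) by apply/hasP; exists x => //; rewrite mem_iota.
have := base4_bool f.
rewrite (H 0 isT) (H 1 isT) (H 2 isT) (H 3 isT) hh /= => /andP [h1 h2]; by split.
Qed.

Lemma lower4 n k : n = 4 + 7 * k -> 4 + 4 * k <= uA (cmat 4 br4 0 1 2 n).
Proof. exact: (@lower 4 br4 0 1 2 4 isT erefl isT isT (@base4)). Qed.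

Definition br5 : seq (seq nat) := [:: [:: 1; 4; 5]; [:: 0; 4; 6]; [:: 3; 6]; [:: 0; 1; 2; 6]; [:: 1; 6; 7]].
Lemma base5_bool (f : nat -> bool) :
  (count f (nth [::] br5 0) != 1) ==> (count f (nth [::] br5 1) != 1) ==> (count f (nth [::] br5 2) != 1) ==> (count f (nth [::] br5 3) != 1) ==> (count f (nth [::] br5 4) != 1) ==> has f (iota 0 (5 + 3)) ==> (4 <= \sum_(0 <= x < 5 + 3) f x) && [|| f 0, f 1 | f 2].
Proof.
rewrite /br5 /= /index_iota /= !big_cons big_nil.
move: (f 0) (f 1) (f 2) (f 3) (f 4) (f 5) (f 6) (f 7).
by do 8! case.
Qed.

Lemma base5 (f : nat -> bool) :
  (forall i, i < 5 -> count f (nth [::] br5 i) != 1) -> (exists2 x, x < 5 + 3 & f x) ->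
  4 <= \sum_(0 <= x < 5 + 3) f x /\ [|| f 0, f 1 | f 2].
Proof.
move=> H [x hx fx].
have hh : has f (iota 0 (5 + 3)) by apply/hasP; exists x => //; rewrite mem_iota.
have := base5_bool f.
rewrite (H 0 isT) (H 1 isT) (H 2 isT) (H 3 isT) (H 4 isT) hh /= => /andP [h1 h2]; by split.
Qed.

Lemma lower5 n k : n = 5 + 7 * k -> 4 + 4 * k <= uA (cmat 5 br5 0 1 2 n).
Proof. exact: (@lower 5 br5 0 1 2 4 isT erefl isT isT (@base5)). Qed.

Definition br6 : seq (seq nat) := [:: [:: 1; 3; 5]; [:: 1; 4; 6]; [:: 2; 3; 6]; [:: 0; 5; 6]; [:: 7; 0]; [:: 8; 1]].
Lemma base6_bool (f : nat -> bool) :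
  (count f (nth [::] br6 0) != 1) ==> (count f (nth [::] br6 1) != 1) ==> (count f (nth [::] br6 2) != 1) ==> (count f (nth [::] br6 3) != 1) ==> (count f (nth [::] br6 4) != 1) ==> (count f (nth [::] br6 5) != 1) ==> has f (iota 0 (6 + 3)) ==> (4 <= \sum_(0 <= x < 6 + 3) f x) && [|| f 0, f 1 | f 3].
Proof.
rewrite /br6 /= /index_iota /= !big_cons big_nil.
move: (f 0) (f 1) (f 2) (f 3) (f 4) (f 5) (f 6) (f 7) (f 8).
by do 9! case.
Qed.

Lemma base6 (f : nat -> bool) :
  (forall i, i < 6 -> count f (nth [::] br6 i) != 1) -> (exists2 x, x < 6 + 3 & f x) ->
  4 <= \sum_(0 <= x < 6 + 3) f x /\ [|| f 0, f 1 | f 3].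
Proof.
move=> H [x hx fx].
have hh : has f (iota 0 (6 + 3)) by apply/hasP; exists x => //; rewrite mem_iota.
have := base6_bool f.
rewrite (H 0 isT) (H 1 isT) (H 2 isT) (H 3 isT) (H 4 isT) (H 5 isT) hh /= => /andP [h1 h2]; by split.
Qed.

Lemma lower6 n k : n = 6 + 7 * k -> 4 + 4 * k <= uA (cmat 6 br6 0 1 3 n).
Proof. exact: (@lower 6 br6 0 1 3 4 isT erefl isT isT (@base6)). Qed.

Definition br7 : seq (seq nat) := [:: [:: 1; 2; 3; 5; 6]; [:: 1; 8]; [:: 4; 5; 7]; [:: 1; 2; 3]; [:: 1; 5; 9]; [:: 0; 1; 4]; [:: 0; 2; 5]].
Lemma base7_bool (f : nat -> bool) :
  (count f (nth [::] br7 0) != 1) ==> (count f (nth [::] br7 1) != 1) ==> (count f (nth [::] br7 2) != 1) ==> (count f (nth [::] br7 3) != 1) ==> (count f (nth [::] br7 4) != 1) ==> (count f (nth [::] br7 5) != 1) ==> (count f (nth [::] br7 6) != 1) ==> has f (iota 0 (7 + 3)) ==> (5 <= \sum_(0 <= x < 7 + 3) f x) && [|| f 0, f 1 | f 2].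
Proof.
rewrite /br7 /= /index_iota /= !big_cons big_nil.
move: (f 0) (f 1) (f 2) (f 3) (f 4) (f 5) (f 6) (f 7) (f 8) (f 9).
by do 10! case.
Qed.

Lemma base7 (f : nat -> bool) :
  (forall i, i < 7 -> count f (nth [::] br7 i) != 1) -> (exists2 x, x < 7 + 3 & f x) ->
  5 <= \sum_(0 <= x < 7 + 3) f x /\ [|| f 0, f 1 | f 2].
Proof.
move=> H [x hx fx].
have hh : has f (iota 0 (7 + 3)) by apply/hasP; exists x => //; rewrite mem_iota.
have := base7_bool f.
rewrite (H 0 isT) (H 1 isT) (H 2 isT) (H 3 isT) (H 4 isT) (H 5 isT) (H 6 isT) hh /= => /andP [h1 h2]; by split.
Qed.

Lemma lower7 n k : n = 7 + 7 * k -> 5 + 4 * k <= uA (cmat 7 br7 0 1 2 n).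
Proof. exact: (@lower 7 br7 0 1 2 5 isT erefl isT isT (@base7)). Qed.


Lemma bigmin_le_idx (I : finType) (P : pred I) (F : I -> nat) x :
  \big[minn/x]_(i | P i) F i <= x.
Proof.
elim: (index_enum I) => [|a s IH]; rewrite ?big_nil ?big_cons //.
by case: (P a) => //; apply: leq_trans (geq_minr _ _) IH.
Qed.

Lemma eps_ge_u n (A : 'M[bool]_(n, n + 3)) : uA A <= epsA A.
Proof.
apply: bigmin_ge; first exact: bigmin_le_idx.
move=> S /andP [nS eS]; apply: bigmin_le_term.
by rewrite nS /=; apply: even_onefree.
Qed.

Lemma up_all n L :
  (forall d x1 x2 x3, d <= 2 * x1 -> d <= 2 * x2 -> d <= 2 * x3 ->
     x1 + x2 + x3 <= 2 * (n + 3 - d) -> d <= L) ->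
  forall A : 'M[bool]_(n, n + 3), epsA A <= L /\ uA A <= L.
Proof.
move=> H A; have [d [x1 [x2 [x3 [h1 [h2 [h3 [h4 [h5 h6]]]]]]]]] := upper A.
have := H d x1 x2 x3 h3 h4 h5 h6 => hd.
split; exact: leq_trans hd.
Qed.

Lemma pin_u n L (M : 'M[bool]_(n, n + 3)) : L <= uA M ->
  (forall d x1 x2 x3, d <= 2 * x1 -> d <= 2 * x2 -> d <= 2 * x3 ->
     x1 + x2 + x3 <= 2 * (n + 3 - d) -> d <= L) ->
  u_mn n (n + 3) = L.
Proof.
move=> hM H; apply/eqP; rewrite eqn_leq; apply/andP; split.
  by apply/bigmax_leqP => A _; case: (up_all H A).
exact: leq_trans hM (leq_bigmax M).
Qed.

Lemma pin_eps n L (M : 'M[bool]_(n, n + 3)) : L <= uA M ->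
  (forall d x1 x2 x3, d <= 2 * x1 -> d <= 2 * x2 -> d <= 2 * x3 ->
     x1 + x2 + x3 <= 2 * (n + 3 - d) -> d <= L) ->
  eps_mn n (n + 3) = L.
Proof.
move=> hM H; apply/eqP; rewrite eqn_leq; apply/andP; split.
  by apply/bigmax_leqP => A _; case: (up_all H A).
exact: leq_trans (leq_trans hM (eps_ge_u M)) (leq_bigmax M).
Qed.

Lemma pin_both n L (M : 'M[bool]_(n, n + 3)) : L <= uA M ->
  (forall d x1 x2 x3, d <= 2 * x1 -> d <= 2 * x2 -> d <= 2 * x3 ->
     x1 + x2 + x3 <= 2 * (n + 3 - d) -> d <= L) ->
  u_mn n (n + 3) = L /\ eps_mn n (n + 3) = L.
Proof. by move=> hM H; split; [exact: pin_u hM H | exact: pin_eps hM H]. Qed.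

Theorem theorem7p1 :
  (forall n : nat, 0 < n -> n %% 7 != 6 ->
     u_mn n (n + 3) = (4 * n + 12) %/ 7 /\ eps_mn n (n + 3) = (4 * n + 12) %/ 7) /\
  (forall m : nat, 0 < m -> u_mn (7 * m - 1) (7 * m + 2) = 4 * m).
Proof.
split.
  move=> n n0 n6.
  have Hup : forall d x1 x2 x3, d <= 2 * x1 -> d <= 2 * x2 -> d <= 2 * x3 ->
     x1 + x2 + x3 <= 2 * (n + 3 - d) -> d <= (4 * n + 12) %/ 7.
    move=> d x1 x2 x3 h1 h2 h3 h4; lia.
  have hr : n %% 7 < 7 by rewrite ltn_mod.
  have en : n = n %% 7 + 7 * (n %/ 7) by lia.
  set k := n %/ 7 in en.
  move: n6 en hr; case: (n %% 7) => [|[|[|[|[|[|[|r]]]]]]] n6 en hr //.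
  - apply: (pin_both (M := cmat 7 br7 0 1 2 n)) Hup.
    have -> : (4 * n + 12) %/ 7 = 5 + 4 * (k - 1) by lia.
    apply: lower7; lia.
  - apply: (pin_both (M := cmat 1 br1 0 1 2 n)) Hup.
    have -> : (4 * n + 12) %/ 7 = 2 + 4 * k by lia.
    exact: lower1.
  - apply: (pin_both (M := cmat 2 br2 0 1 2 n)) Hup.
    have -> : (4 * n + 12) %/ 7 = 2 + 4 * k by lia.
    exact: lower2.
  - apply: (pin_both (M := cmat 3 br3 0 1 2 n)) Hup.
    have -> : (4 * n + 12) %/ 7 = 3 + 4 * k by lia.
    exact: lower3.
  - apply: (pin_both (M := cmat 4 br4 0 1 2 n)) Hup.
    have -> : (4 * n + 12) %/ 7 = 4 + 4 * k by lia.
    exact: lower4.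
  - apply: (pin_both (M := cmat 5 br5 0 1 2 n)) Hup.
    have -> : (4 * n + 12) %/ 7 = 4 + 4 * k by lia.
    exact: lower5.
move=> m m0.
have -> : 7 * m + 2 = (7 * m - 1) + 3 by lia.
apply: (pin_u (M := cmat 6 br6 0 1 3 (7 * m - 1))).
  have -> : 4 * m = 4 + 4 * (m - 1) by lia.
  apply: lower6; lia.
move=> d x1 x2 x3 h1 h2 h3 h4; lia.
Qed.
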